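(* Let $\mu\in V_n$ be an associative algebra such that there exists $[\lambda]\in\mathrm{GL}(n).[\mu]$ with $\mathrm M_\lambda$ negative definite. Then $\mu$ is semisimple.
   Context: $V_n$ is the space of bilinear maps $\mu:\mathbb C^n\times\mathbb C^n\to\mathbb C^n$ with $\mathrm{GL}(n)$-action $g.\mu(X,Y)=g\mu(g^{-1}X,g^{-1}Y)$ and the standard Hermitian inner product on $\mathbb C^n$. $L^\lambda_XY=\lambda(X,Y)$, $R^\lambda_XY=\lambda(Y,X)$, and for an orthonormal basis $\{X_i\}$, $\mathrm M_\lambda=2\sum_i L^\lambda_{X_i}(L^\lambda_{X_i})^*-2\sum_i (L^\lambda_{X_i})^*L^\lambda_{X_i}-2\sum_i (R^\lambda_{X_i})^*R^\lambda_{X_i}$. An associative algebra is semisimple if its radical (largest nilpotent ideal) is zero. *)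

(* Defs.v *)
From HB Require Import structures.
From mathcomp Require Import all_boot all_order all_algebra.
From mathcomp Require Import reals.
From mathcomp Require Import complex.
Set Implicit Arguments. Unset Strict Implicit. Unset Printing Implicit Defensive.
Import Order.TTheory GRing.Theory Num.Theory.
Local Open Scope ring_scope.
Local Open Scope complex_scope.

(* Vectors of C^n are column vectors 'cV[R[i]]_n, with the standard
   Hermitian inner product <x,y> = x^* ^T y. *)

Section Defs.
Variable R : realType.
Local Notation C := (R[i]).
Variable n : nat.
Local Notation vec := 'cV[C]_n.

Definition bilinear_map (mu : vec -> vec -> vec) : Prop :=
  (forall (a : C) (X X' Y : vec), mu (a *: X + X') Y = a *: mu X Y + mu X' Y) /\
  (forall (a : C) (X Y Y' : vec), mu X (a *: Y + Y') = a *: mu X Y + mu X Y').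

Definition gl_act (g : 'M[C]_n) (mu : vec -> vec -> vec) : vec -> vec -> vec :=
  fun X Y => g *m mu (invmx g *m X) (invmx g *m Y).

Definition adjmx (A : 'M[C]_n) : 'M[C]_n := (map_mx conjc A)^T.

Definition evec (i : 'I_n) : vec := delta_mx i 0.

Definition Lmx (lam : vec -> vec -> vec) (X : vec) : 'M[C]_n :=
  \matrix_(i, j) (lam X (evec j)) i 0.
Definition Rmx (lam : vec -> vec -> vec) (X : vec) : 'M[C]_n :=
  \matrix_(i, j) (lam (evec j) X) i 0.

(* M_lam computed in the orthonormal basis {e_i}. *)
Definition Mmx (lam : vec -> vec -> vec) : 'M[C]_n :=
  2%:R *: (\sum_i Lmx lam (evec i) *m adjmx (Lmx lam (evec i)))
  - 2%:R *: (\sum_i adjmx (Lmx lam (evec i)) *m Lmx lam (evec i))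
  - 2%:R *: (\sum_i adjmx (Rmx lam (evec i)) *m Rmx lam (evec i)).

Definition neg_def (A : 'M[C]_n) : Prop :=
  (adjmx A = A) /\
  (forall x : vec, x != 0 -> ((map_mx conjc x)^T *m A *m x) 0 0 < 0).

Definition associative_alg (mu : vec -> vec -> vec) : Prop :=
  forall X Y Z : vec, mu (mu X Y) Z = mu X (mu Y Z).

Definition is_ideal (mu : vec -> vec -> vec) (I : vec -> Prop) : Prop :=
  [/\ I 0,
      (forall (a : C) (x y : vec), I x -> I y -> I (a *: x + y)),
      (forall x y : vec, I x -> I (mu x y)) &
      (forall x y : vec, I y -> I (mu x y))].

(* I is nilpotent: I^k = 0 for some k, i.e. every product of k elements of I
   vanishes (products taken left-normed: foldl mu x1 [x2;...;xk]). *)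
Definition nilpotent_ideal (mu : vec -> vec -> vec) (I : vec -> Prop) : Prop :=
  is_ideal mu I /\
  exists k : nat, forall (x : vec) (s : seq vec),
    size s = k -> I x -> (forall y, y \in s -> I y) -> foldl mu x s = 0.

(* Semisimple: the radical (largest nilpotent ideal) is zero, i.e. every
   nilpotent ideal is the zero ideal. *)
Definition semisimple (mu : vec -> vec -> vec) : Prop :=
  forall I : vec -> Prop, nilpotent_ideal mu I -> forall x, I x -> x = 0.

End Defs.

(* Main.v *)
Require Import Defs.
From HB Require Import structures.
From mathcomp Require Import all_boot all_order all_algebra.
From mathcomp Require Import reals.
From mathcomp Require Import complex.
From mathcomp Require Import ring.
From Stdlib Require Import Classical.
Set Implicit Arguments. Unset Strict Implicit. Unset Printing Implicit Defensive.
Import Order.TTheory GRing.Theory Num.Theory.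
Local Open Scope ring_scope.
Local Open Scope complex_scope.

Section Lin.
Variable R : realType.
Local Notation C := (R[i]).

Definition hadj {m p} (A : 'M[C]_(m,p)) : 'M[C]_(p,m) := (map_mx conjc A)^T.
Definition fn {m p} (A : 'M[C]_(m,p)) : C := \tr (hadj A *m A).

Lemma hadjM m p q (A : 'M[C]_(m,p)) (B : 'M[C]_(p,q)) :
  hadj (A *m B) = hadj B *m hadj A.
Proof. by rewrite /hadj map_mxM trmx_mul. Qed.

Lemma hadjK m p (A : 'M[C]_(m,p)) : hadj (hadj A) = A.
Proof.
apply/matrixP=> i j; rewrite /hadj !mxE /=.
by rewrite conjcK.
Qed.

Lemma hadjD m p (A B : 'M[C]_(m,p)) : hadj (A + B) = hadj A + hadj B.
Proof. by rewrite /hadj map_mxD linearD. Qed.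

Lemma hadjN m p (A : 'M[C]_(m,p)) : hadj (- A) = - hadj A.
Proof. by rewrite /hadj map_mxN linearN. Qed.

Lemma hadj1 m : hadj (1%:M : 'M[C]_m) = 1%:M.
Proof. by rewrite /hadj map_mx1 trmx1. Qed.

Lemma fnE m p (A : 'M[C]_(m,p)) :
  fn A = \sum_j \sum_i A i j * (A i j)^*%C.
Proof.
rewrite /fn /mxtrace; apply: eq_bigr => j _; rewrite mxE.
by apply: eq_bigr => i _; rewrite !mxE /= mulrC.
Qed.

Lemma fn_ge0 m p (A : 'M[C]_(m,p)) : 0 <= fn A.
Proof.
rewrite fnE; apply: sumr_ge0 => j _; apply: sumr_ge0 => i _.
exact: (@mul_conjC_ge0 C).
Qed.

Lemma fn_eq0 m p (A : 'M[C]_(m,p)) : fn A = 0 -> A = 0.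
Proof.
rewrite fnE => H; apply/matrixP => i j; rewrite mxE.
have H1 : forall j, \sum_i A i j * (A i j)^*%C = 0.
  move=> j0; apply: (psumr_eq0P _ H) => //= k _.
  by apply: sumr_ge0 => l _; exact: (@mul_conjC_ge0 C).
have H3 : A i j * (A i j)^*%C = 0.
  by apply: (psumr_eq0P _ (H1 j)) => //= k _; exact: (@mul_conjC_ge0 C).
by apply/eqP; rewrite -(@mul_conjC_eq0 C); apply/eqP.
Qed.

Definition hp {m} (E : 'M[C]_m) := hadj E = E /\ E *m E = E.

Lemma fn_mulr m p (X : 'M[C]_(m,p)) (E : 'M[C]_p) : hp E ->
  fn (X *m E) = \tr (hadj X *m X *m E).
Proof.
case=> HE HEE; rewrite /fn hadjM HE -!mulmxA mxtrace_mulC -!mulmxA HEE.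
by rewrite mulmxA.
Qed.

Lemma fn_mull m p (X : 'M[C]_(m,p)) (E : 'M[C]_m) : hp E ->
  fn (E *m X) = \tr (hadj X *m E *m X).
Proof.
case=> HE HEE; rewrite /fn hadjM HE -!mulmxA (mulmxA E E) HEE.
by rewrite mulmxA.
Qed.

Lemma hp_compl m (E : 'M[C]_m) : hp E -> hp (1%:M - E).
Proof.
case=> HE HEE; split; first by rewrite hadjD hadjN hadj1 HE.
by rewrite mulmxBl mul1mx mulmxBr mulmx1 HEE subrr subr0.
Qed.

Lemma fn_splitr m p (X : 'M[C]_(m,p)) (E : 'M[C]_p) : hp E ->
  fn X = fn (X *m E) + fn (X *m (1%:M - E)).
Proof.
move=> hE; rewrite (fn_mulr _ hE) (fn_mulr _ (hp_compl hE)) -mxtraceD.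
by rewrite -mulmxDr addrC subrK mulmx1.
Qed.

Lemma fn_splitl m p (X : 'M[C]_(m,p)) (E : 'M[C]_m) : hp E ->
  fn X = fn (E *m X) + fn ((1%:M - E) *m X).
Proof.
move=> hE; rewrite (fn_mull _ hE) (fn_mull _ (hp_compl hE)) -mxtraceD.
by rewrite -!mulmxA -mulmxDr -mulmxDl addrC subrK mul1mx.
Qed.

Lemma fn_cols m p (X : 'M[C]_(m,p)) : fn X = \sum_j fn (X *m delta_mx j (0 : 'I_1)).
Proof.
rewrite fnE; apply: eq_bigr => j _; rewrite fnE big_ord1.
by apply: eq_bigr => i _; rewrite -colE !mxE.
Qed.


Section Bil.
Variable n : nat.
Local Notation vec := 'cV[C]_n.
Variable lam : vec -> vec -> vec.
Hypothesis Hb : bilinear_map lam.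

Local Notation e j := (delta_mx j (0 : 'I_1) : vec).

Lemma lamr0 x : lam x 0 = 0.
Proof.
have h := Hb.2 1 x 0 0; rewrite scale1r addr0 scale1r in h.
by apply: (addrI (lam x 0)); rewrite addr0 -h.
Qed.

Lemma laml0 x : lam 0 x = 0.
Proof.
have h := Hb.1 1 0 0 x; rewrite scale1r addr0 scale1r in h.
by apply: (addrI (lam 0 x)); rewrite addr0 -h.
Qed.

Lemma lamrZ x a y : lam x (a *: y) = a *: lam x y.
Proof. by have h := Hb.2 a x y 0; rewrite addr0 lamr0 addr0 in h. Qed.
Lemma lamlZ x a y : lam (a *: y) x = a *: lam y x.
Proof. by have h := Hb.1 a y 0 x; rewrite addr0 laml0 addr0 in h. Qed.
Lemma lamrD x y z : lam x (y + z) = lam x y + lam x z.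
Proof. by have h := Hb.2 1 x y z; rewrite !scale1r in h. Qed.
Lemma lamlD x y z : lam (y + z) x = lam y x + lam z x.
Proof. by have h := Hb.1 1 y z x; rewrite !scale1r in h. Qed.

Lemma vec_decomp (y : vec) : y = \sum_j y j 0 *: e j.
Proof.
apply/matrixP => i k; rewrite summxE (bigD1 i) //= big1 ?addr0.
  by rewrite !mxE !ord1 !eqxx mulr1.
by move=> j Hj; rewrite !mxE eq_sym (negbTE Hj) /= mulr0.
Qed.

Lemma lam_sumr x (a : 'I_n -> C) :
  lam x (\sum_j a j *: e j) = \sum_j a j *: lam x (e j).
Proof.
apply: (big_rec2 (fun u v => lam x u = v)); first exact: lamr0.
by move=> j u v _ H; rewrite lamrD lamrZ H.
Qed.

Lemma lam_suml x (a : 'I_n -> C) :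
  lam (\sum_j a j *: e j) x = \sum_j a j *: lam (e j) x.
Proof.
apply: (big_rec2 (fun u v => lam u x = v)); first exact: laml0.
by move=> j u v _ H; rewrite lamlD lamlZ H.
Qed.

Lemma LmxE x y : Lmx lam x *m y = lam x y.
Proof.
rewrite {2}(vec_decomp y) lam_sumr; apply/matrixP => i k.
rewrite !mxE summxE; apply: eq_bigr => j _; rewrite !mxE !ord1 mulrC.
by [].
Qed.

Lemma RmxE x y : Rmx lam y *m x = lam x y.
Proof.
rewrite {2}(vec_decomp x) lam_suml; apply/matrixP => i k.
rewrite !mxE summxE; apply: eq_bigr => j _; rewrite !mxE !ord1 mulrC.
by [].
Qed.

Definition F (A B D : 'M[C]_n) :=
  \sum_i \sum_j fn (D *m lam (A *m e i) (B *m e j)).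

Lemma FL A B D : \sum_i fn (D *m Lmx lam (A *m e i) *m B) = F A B D.
Proof.
apply: eq_bigr => i _; rewrite fn_cols; apply: eq_bigr => j _.
by rewrite -!mulmxA LmxE.
Qed.

Lemma FR A B D : \sum_j fn (D *m Rmx lam (B *m e j) *m A) = F A B D.
Proof.
rewrite /F [in RHS]exchange_big; apply: eq_bigr => j _; rewrite fn_cols.
by apply: eq_bigr => i _; rewrite -!mulmxA RmxE.
Qed.

Lemma F_splitA A B D E : hp E ->
  F A B D = F (A *m E) B D + F (A *m (1%:M - E)) B D.
Proof.
move=> hE; rewrite -!FR -big_split; apply: eq_bigr => j _.
by rewrite (fn_splitr _ hE) !mulmxA.
Qed.

Lemma F_splitB A B D E : hp E ->
  F A B D = F A (B *m E) D + F A (B *m (1%:M - E)) D.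
Proof.
move=> hE; rewrite -!FL -big_split; apply: eq_bigr => i _.
by rewrite (fn_splitr _ hE) !mulmxA.
Qed.

Lemma F_splitD A B D E : hp E ->
  F A B D = F A B (E *m D) + F A B ((1%:M - E) *m D).
Proof.
move=> hE; rewrite -!big_split; apply: eq_bigr => i _.
rewrite -!big_split; apply: eq_bigr => j _.
by rewrite (fn_splitl _ hE) !mulmxA.
Qed.

Lemma F_ge0 A B D : 0 <= F A B D.
Proof. by apply: sumr_ge0 => i _; apply: sumr_ge0 => j _; apply: fn_ge0. Qed.

End Bil.

Section Key.
Variable n : nat.
Local Notation vec := 'cV[C]_n.
Variable lam : vec -> vec -> vec.
Hypothesis Hb : bilinear_map lam.
Variable P : 'M[C]_n.
Hypothesis hP : hp P.
Hypothesis h1 : forall x y, P *m lam x (P *m y) = lam x (P *m y).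
Hypothesis h2 : forall x y, P *m lam (P *m x) y = lam (P *m x) y.
Hypothesis h3 : forall x y, lam (P *m x) (P *m y) = 0.

Lemma trZ (a : C) (A : 'M[C]_n) : \tr (a *: A) = a * \tr A.
Proof. by rewrite /mxtrace mulr_sumr; apply: eq_bigr => i _; rewrite mxE. Qed.

Lemma trN (A : 'M[C]_n) : \tr (- A) = - \tr A.
Proof. by rewrite /mxtrace -sumrN; apply: eq_bigr => i _; rewrite mxE. Qed.

Lemma trS (A : 'I_n -> 'M[C]_n) : \tr (\sum_i A i) = \sum_i \tr (A i).
Proof.
rewrite /mxtrace exchange_big; apply: eq_bigr => i _; rewrite summxE //.
Qed.

Lemma trLLP (X : 'M[C]_n) : \tr (X *m hadj X *m P) = fn (P *m X).
Proof.
by rewrite (fn_mull _ hP) [RHS]mxtrace_mulC mulmxA.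
Qed.

Lemma trLsLP (X : 'M[C]_n) : \tr (hadj X *m X *m P) = fn (X *m P).
Proof. by rewrite (fn_mulr _ hP). Qed.

Lemma tr_MP_ge0 : 0 <= \tr (Mmx lam *m P).
Proof.
have E1 : \sum_i fn (P *m Lmx lam (evec R i)) = F lam 1%:M 1%:M P.
  by rewrite -(FL Hb); apply: eq_bigr => i _; rewrite mul1mx mulmx1.
have E2 : \sum_i fn (Lmx lam (evec R i) *m P) = F lam 1%:M P 1%:M.
  by rewrite -(FL Hb); apply: eq_bigr => i _; rewrite !mul1mx.
have E3 : \sum_i fn (Rmx lam (evec R i) *m P) = F lam P 1%:M 1%:M.
  by rewrite -(FR Hb); apply: eq_bigr => i _; rewrite !mul1mx.
have -> : \tr (Mmx lam *m P) =
   2%:R * F lam 1%:M 1%:M P - 2%:R * F lam 1%:M P 1%:M - 2%:R * F lam P 1%:M 1%:M.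
  rewrite /Mmx !mulmxBl -!scalemxAl !mulmx_suml !mxtraceD !trN !trZ !trS.
  rewrite -E1 -E2 -E3.
  congr (_ * _ - _ * _ - _ * _); apply: eq_bigr => i _.
  - exact: trLLP.
  - exact: trLsLP.
  - exact: trLsLP.
have hP' := hp_compl hP.
have S1 : F lam 1%:M 1%:M P = F lam 1%:M P 1%:M +
     (F lam P (1%:M - P) 1%:M + F lam (1%:M - P) (1%:M - P) P).
  rewrite (F_splitB Hb _ _ _ hP) !mul1mx; congr (_ + _).
    apply: eq_bigr => i _; apply: eq_bigr => j _.
    by rewrite h1 !mul1mx.
  rewrite (F_splitA Hb _ _ _ hP) !mul1mx; congr (_ + _).
  apply: eq_bigr => i _; apply: eq_bigr => j _.
  by rewrite h2 !mul1mx.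
have S3 : F lam P 1%:M 1%:M = 0 + F lam P (1%:M - P) 1%:M.
  rewrite (F_splitB Hb _ _ _ hP) !mul1mx; congr (_ + _).
  apply: big1 => i _; apply: big1 => j _.
  rewrite h3 mulmx0.
  by apply/eqP; rewrite /fn mulmx0 linear0.
rewrite S1 S3.
have -> : forall a b c : C, 2%:R * (a + (b + c)) - 2%:R * a - 2%:R * (0 + b)
   = 2%:R * c by move=> a b c; ring.
by rewrite mulr_ge0 ?ler0n ?F_ge0.
Qed.

End Key.

Lemma tr_MP_lt0 n (M P : 'M[C]_n) : neg_def M -> hp P -> P != 0 ->
  \tr (M *m P) < 0.
Proof.
case=> _ HM [HPa HPP] HP0.
have -> : \tr (M *m P) = \sum_k (hadj (col k P) *m M *m col k P) 0 0.
  rewrite -{1}HPP mulmxA mxtrace_mulC -{1}HPa mulmxA.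
  rewrite /mxtrace; apply: eq_bigr => k _.
  rewrite !mxE; apply: eq_bigr => j _; rewrite !mxE; congr (_ * _).
  by apply: eq_bigr => l _; rewrite !mxE.
have [k0 Hk0] : exists k, col k P != 0.
  case/boolP: [exists k, col k P != 0] => [/existsP //|].
  rewrite negb_exists => /forallP Hc.
  exfalso; move/negP: HP0; apply; apply/eqP/matrixP => i j.
  by have /negPn/eqP/matrixP/(_ i 0) := Hc j; rewrite !mxE.
rewrite (bigD1 k0) //= -[X in _ < X](addr0 (0:C)).
apply: ltr_leD; first exact: HM.
apply: sumr_le0 => k _.
have [->|Hk] := eqVneq (col k P) 0; last exact: ltW (HM _ Hk).
by rewrite mulmx0 mxE.
Qed.


Section Proj.
Variable n : nat.
Local Notation vec := 'cV[C]_n.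
Variable N : vec -> Prop.
Hypothesis N0 : N 0.
Hypothesis Nlin : forall a x y, N x -> N y -> N (a *: x + y).

Lemma NZ a x : N x -> N (a *: x).
Proof. by move=> Hx; rewrite -[_ *: _]addr0; apply: Nlin. Qed.

Lemma NS (I : finType) (f : I -> vec) : (forall i, N (f i)) -> N (\sum_i f i).
Proof.
move=> Hf; apply: (big_rec (fun u => N u)) => // i u _ Hu.
by rewrite -[f i]scale1r; apply: Nlin.
Qed.

Definition goodB r (B : 'M[C]_(r, n)) := (forall i, N (row i B)^T) /\ row_free B.

Lemma maxB : exists r (B : 'M[C]_(r, n)), goodB B /\
   forall B' : 'M[C]_(r + 1, n), ~ goodB B'.
Proof.
apply: NNPP => Hn.
have Hall : forall r, exists B : 'M[C]_(r, n), goodB B.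
  elim=> [|r [B HB]].
    exists 0; split; first by case.
    by rewrite /row_free mxrank0.
  rewrite -addn1; apply: NNPP => Hr; apply: Hn; exists r, B; split=> // B' HB'.
  by apply: Hr; exists B'.
have [B [_ HB]] := Hall n.+1.
by move: (rank_leq_col B); rewrite (eqP HB) ltnn.
Qed.

Lemma proj_exists : exists P : 'M[C]_n,
  [/\ hp P, (forall v, N (P *m v)) & (forall v, N v -> P *m v = v)].
Proof.
have [r [B [[HBN HBf] Hmax]]] := maxB.
pose Q : 'M[C]_(n, r) := B^T.
have NQ : forall w, N (Q *m w).
  move=> w; rewrite /Q -[Q *m w]trmxK trmx_mul trmxK mulmx_sum_row.
  rewrite (raddf_sum (@trmx C 1 n)) /=.
  by apply: NS => i; rewrite linearZ /=; apply: NZ.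
have Qinj : forall w : 'cV[C]_r, Q *m w = 0 -> w = 0.
  move=> w Hw; have : w^T *m B = 0 by rewrite -[B]trmxK -trmx_mul Hw trmx0.
  move/eqP; rewrite (mulmx_free_eq0 _ HBf) => /eqP Hw'.
  by rewrite -[w]trmxK Hw' trmx0.
have Qsurj : forall v, N v -> exists w : 'cV[C]_r, v = Q *m w.
  move=> v Hv; have Hsub : (v^T <= B)%MS.
    apply/negPn/negP => Hns; apply: (Hmax (col_mx B v^T)); split.
      move=> i; rewrite -(splitK i); case: (split i) => k /=.
        by rewrite rowKu.
      by rewrite rowKd ord1 row_id trmxK.
    have H1 := mxrank_leqif_sup (addsmxSl B v^T).
    have H2 : (\rank B < \rank (B + v^T)%MS)%N.
      rewrite ltn_neqAle H1.1 andbT H1.2; apply/negP => Hs.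
      by move/negP: Hns; apply; apply: submx_trans (addsmxSr B v^T) Hs.
    rewrite /row_free eqn_leq rank_leq_row /=.
    have <- : \rank (B + v^T)%MS = \rank (col_mx B v^T) by rewrite addsmxE.
    by move: H2; rewrite (eqP HBf) addn1.
  have [D HD] := submxP Hsub.
  by exists D^T; rewrite /Q -trmx_mul -HD trmxK.
pose G := hadj Q *m Q.
have HGa : hadj G = G by rewrite /G hadjM hadjK.
have Gu : G \in unitmx.
  rewrite -row_free_unit -kermx_eq0; apply/eqP/row_matrixP => i.
  have /sub_kermxP Hk := row_sub i (kermx G).
  set u := row i (kermx G) in Hk *.
  have Hf : fn (Q *m hadj u) = 0.
    rewrite /fn hadjM hadjK mulmxA -(mulmxA u) -/G Hk mul0mx.
    by rewrite /mxtrace big1 // => k _; rewrite mxE.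
  move/fn_eq0/Qinj: Hf => Hu.
  by rewrite row0 -[u]hadjK Hu /hadj map_mx0 trmx0.
pose P := Q *m invmx G *m hadj Q.
exists P; split.
- split.
    rewrite /P !hadjM hadjK mulmxA.
    congr (_ *m _ *m _).
    by rewrite /hadj map_invmx trmx_inv -/(hadj G) HGa.
  rewrite /P !mulmxA -(mulmxA _ (hadj Q) Q) -/G -(mulmxA _ G) mulmxV //.
  by rewrite mulmx1.
- by move=> v; rewrite /P -!mulmxA; apply: NQ.
- move=> v /Qsurj [w ->]; rewrite /P -!mulmxA (mulmxA (hadj Q)) -/G.
  by rewrite mulKmx.
Qed.

End Proj.

Section Alg.
Variable n : nat.
Local Notation vec := 'cV[C]_n.
Variable mu : vec -> vec -> vec.
Hypothesis Hb : bilinear_map mu.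
Hypothesis Ha : associative_alg mu.
Variable I : vec -> Prop.
Hypothesis HI : is_ideal mu I.

Lemma foldl_I x s : I x -> (forall y, y \in s -> I y) -> I (foldl mu x s).
Proof.
case: HI => _ _ HIl _.
elim: s x => [//|a s IH] x Hx Hs /=.
apply: IH; first by apply: HIl.
by move=> y Hy; apply: Hs; rewrite inE Hy orbT.
Qed.

Lemma foldl_assoc y x s : mu y (foldl mu x s) = foldl mu (mu y x) s.
Proof. by elim: s x => [//|a s IH] x /=; rewrite IH Ha. Qed.

Definition Tset t := I t /\ forall y, I y -> mu t y = 0 /\ mu y t = 0.

Lemma exists_T (k : nat) x :
  (forall (x : vec) (s : seq vec), size s = k -> I x ->
      (forall y, y \in s -> I y) -> foldl mu x s = 0) ->
  I x -> x != 0 -> exists p, p != 0 /\ Tset p.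
Proof.
move=> Hk Hx Hx0; elim: k Hk => [|j IH] Hk.
  have /= H0 := Hk x [::] erefl Hx (fun y (hy : y \in [::]) => ltac:(done)).
  by rewrite H0 eqxx in Hx0.
case: (classic (exists x' (s : seq vec), [/\ size s = j, I x',
     (forall y, y \in s -> I y) & foldl mu x' s != 0])).
  move=> [x' [s [Hs Hx' Hsy Hne]]]; exists (foldl mu x' s); split=> //.
  split; first exact: foldl_I.
  move=> y Hy; split.
    rewrite -foldl_rcons; apply: Hk => //; first by rewrite size_rcons Hs.
    by move=> z; rewrite mem_rcons inE => /orP [/eqP ->|/Hsy].
  rewrite foldl_assoc; apply: (Hk y (x' :: s)) => //=.
    by rewrite Hs.
  by move=> z; rewrite inE => /orP [/eqP ->|/Hsy].
move=> Hno; apply: IH => x1 s Hs Hx1 Hsy.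
case: (classic (foldl mu x1 s = 0)) => // Hne; exfalso; apply: Hno.
by exists x1, s; split=> //; apply/eqP.
Qed.

End Alg.
End Lin.

Theorem mainTheorem12 (R : realType) (n : nat)
  (mu : 'cV[R[i]]_n -> 'cV[R[i]]_n -> 'cV[R[i]]_n) :
  bilinear_map mu -> associative_alg mu ->
  (exists (lam : 'cV[R[i]]_n -> 'cV[R[i]]_n -> 'cV[R[i]]_n)
          (g : 'M[R[i]]_n) (c : R[i]),
      [/\ g \in unitmx, c != 0,
          (forall X Y, lam X Y = c *: gl_act g mu X Y) &
          neg_def (Mmx lam)]) ->
  semisimple mu.
Proof.
move=> Hb Ha [lam [g [c [Hg Hc Hlam HM]]]] I [HI [k Hk]] x Hx.
case: (classic (x = 0)) => // /eqP Hx0; exfalso.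
have [p [Hp0 [HpI HpT]]] := exists_T Ha HI Hk Hx Hx0.
case: (HI) => HI0 HIlin HIl HIr.
pose T := Tset mu I.
have T0 : T 0.
  split=> // y _; by rewrite (laml0 Hb) (lamr0 Hb).
have Tlin : forall a t t', T t -> T t' -> T (a *: t + t').
  move=> a t t' [Ht Ht'] [Hu Hu']; split; first exact: HIlin.
  move=> y Hy; have [h1 h2] := Ht' y Hy; have [h3 h4] := Hu' y Hy.
  by rewrite (lamlD Hb) (lamlZ Hb) (lamrD Hb) (lamrZ Hb) h1 h2 h3 h4 scaler0 addr0.
have TZ : forall a t, T t -> T (a *: t).
  by move=> a t Ht; rewrite -[_ *: _]addr0; apply: Tlin.
have TmuL : forall a t, T t -> T (mu a t).
  move=> a t [Ht Ht']; split; first exact: HIr.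
  move=> y Hy; split.
    by rewrite Ha (Ht' y Hy).1 (lamr0 Hb).
  by rewrite -Ha (Ht' _ (HIl _ a Hy)).2.
have TmuR : forall a t, T t -> T (mu t a).
  move=> a t [Ht Ht']; split; first exact: HIl.
  move=> y Hy; split.
    by rewrite Ha (Ht' _ (HIr a _ Hy)).1.
  by rewrite -Ha (Ht' y Hy).2 (laml0 Hb).
pose gi := invmx g.
have giK : forall v : 'cV[R[i]]_n, gi *m (g *m v) = v by move=> v; rewrite /gi mulKmx.
have lamE : forall X Y, lam X Y = c *: (g *m mu (gi *m X) (gi *m Y)).
  by move=> X Y; rewrite Hlam.
pose N := fun v => T (gi *m v).
have N0 : N 0 by rewrite /N mulmx0.
have Nlin : forall a v w, N v -> N w -> N (a *: v + w).
  by move=> a v w Hv Hw; rewrite /N mulmxDr -scalemxAr; apply: Tlin.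
have Hbl : bilinear_map lam.
  split=> a X X' Y; rewrite !lamE mulmxDr -scalemxAr.
    rewrite (lamlD Hb) (lamlZ Hb) mulmxDr -scalemxAr scalerDr !scalerA mulrC //.
  rewrite (lamrD Hb) (lamrZ Hb) mulmxDr -scalemxAr scalerDr !scalerA mulrC //.
have NlamL : forall a v, N v -> N (lam a v).
  by move=> a v Hv; rewrite /N lamE -scalemxAr giK; apply/TZ/TmuL.
have NlamR : forall a v, N v -> N (lam v a).
  by move=> a v Hv; rewrite /N lamE -scalemxAr giK; apply/TZ/TmuR.
have Nsq : forall v w, N v -> N w -> lam v w = 0.
  move=> v w [Hv Hv'] [Hw Hw'].
  by rewrite lamE (Hv' _ Hw).1 mulmx0 scaler0.
have [P [hP PN PF]] := proj_exists N0 Nlin.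
have h1 : forall x y, P *m lam x (P *m y) = lam x (P *m y).
  by move=> x' y; apply/PF/NlamL/PN.
have h2 : forall x y, P *m lam (P *m x) y = lam (P *m x) y.
  by move=> x' y; apply/PF/NlamR/PN.
have h3 : forall x y, lam (P *m x) (P *m y) = 0.
  by move=> x' y; apply: Nsq; apply: PN.
have HP0 : P != 0.
  apply/eqP => HP; move/eqP: Hp0; apply.
  have Hv : N (g *m p) by rewrite /N giK; split.
  have := PF _ Hv; rewrite HP mul0mx => /esym Hgp.
  by rewrite -(giK p) Hgp mulmx0.
have := tr_MP_ge0 Hbl hP h1 h2 h3.
have := tr_MP_lt0 HM hP HP0.
move=> H1 H2; have := le_lt_trans H2 H1.
by rewrite ltxx.
Qed.
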